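(* For every $i\in\{0,1,2,3\}$ the subshift $(X_i,T)$ has zero topological entropy.
   Context: Let $\tau:\mathbb N\to(0,\infty)$ be non-increasing with $\tau(n)\to0$. Fix integers $2\le q_1<q_2<\cdots$ such that for every $k\ge1$: (i) $q_{k+1}>q_k^4+3q_k$; (ii) $\tau(\lceil q_{k+1}/3\rceil)<\frac1{16q_k}$. For $k\ge1$ put $q^{(0)}_k=q_{2k}$, $q^{(1)}_k=q_{2k+1}$, $q^{(2)}_k=q^{(0)}_k-1$, $q^{(3)}_k=q^{(1)}_k-1$, and $L^{(i)}_k=\lfloor q^{(i)}_{k+1}/(3q^{(i)}_k)\rfloor$. Let $s^{(i)}_k\in\{-1,0,1\}^{\mathbb N}$ (indices $n\ge1$) be given by $s^{(i)}_k(n)=1$ if $n=jq^{(i)}_k$ with $1\le j\le L^{(i)}_k$, $s^{(i)}_k(n)=-1$ if $n=jq^{(i)}_k$ with $L^{(i)}_k<j\le2L^{(i)}_k$, and $s^{(i)}_k(n)=0$ otherwise. For $w\in\{-1,0,1\}^{\mathbb N}$ and $p\in\mathbb N_0$ let $\sigma^{-p}w$ be defined by $(\sigma^{-p}w)(n)=0$ for $1\le n\le p$ and $(\sigma^{-p}w)(n)=w(n-p)$ for $n>p$. For $l\le m$ write $w|_l^m=(w_l,\dots,w_m)$. Let $R^{(i)}_k=\{(\sigma^{-p}s^{(i)}_k)|_{q^{(i)}_k}^{q^{(i)}_{k+1}-1}:p=0,1,\dots,q^{(i)}_k\}$ and $P^{(i)}=\{y\in\{-1,0,1\}^{\mathbb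 N}: y(n)=0\text{ for }1\le n<q^{(i)}_1,\ y|_{q^{(i)}_k}^{q^{(i)}_{k+1}-1}\in R^{(i)}_k\text{ for all }k\ge1\}$. Let $Z=\{-1,0,1\}^{\mathbb N}\times\{-1,0,1\}^{\mathbb Z}$, where each factor carries the metric $d(u,v)=3^{-\min\{|m|:u_m\neq v_m\}}$ and $Z$ the maximum of the two coordinate metrics. $\sigma$ is the left shift $(\sigma u)_m=u_{m+1}$ (invertible on $\{-1,0,1\}^{\mathbb Z}$). Define $T:Z\to Z$, $T(y,z)=(\sigma y,\sigma^{y_1}z)$, and for $i\in\{0,1,2,3\}$ let $X_i=\overline{\bigcup_{n\ge0}T^n(P^{(i)}\times\{-1,0,1\}^{\mathbb Z})}$ (a closed $T$-invariant subset of $Z$). *)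

(* Defs.v *)
From Stdlib Require Import Reals Lra Lia ZArith Arith List Bool.
Open Scope R_scope.

(* A one-sided sequence y = (y_1, y_2, ...) is represented by a function   *)
(* yr : nat -> Z with  yr k = y_{k+1}  (so paper index n >= 1 is stored at   *)

Definition seq1 := nat -> Z.
Definition seq2 := Z -> Z.
Definition point := (seq1 * seq2)%type.

Definition py (y : seq1) (n : nat) : Z := y (n - 1)%nat.

Definition is_sym (a : Z) : Prop := a = (-1)%Z \/ a = 0%Z \/ a = 1%Z.

Definition in_Omega (x : point) : Prop :=
  (forall k, is_sym (fst x k)) /\ (forall m, is_sym (snd x m)).

(* Metric.  d1(u,v) = 3^{-min{m >= 1 : u_m <> v_m}} on {-1,0,1}^N,
   d2(u,v) = 3^{-min{|m| : u_m <> v_m}} on {-1,0,1}^Z, and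
   d((y,z),(y',z')) = max(d1(y,y'), d2(z,z')).
   Since d1 (resp. d2) is the maximum of 3^{-m} (resp. 3^{-|m|}) over the
   (attained) set of differing positions, we have literally
     d > eps  <->  some differing position m has 3^{-|m|} > eps,
     d < eps  <->  every differing position m has 3^{-|m|} < eps.
   We only ever use the metric through these two strict comparisons. *)

Definition w1 (k : nat) : R := (/ 3) ^ (S k).          (* 3^{-(k+1)} : paper index k+1 *)
Definition w2 (m : Z) : R := (/ 3) ^ (Z.abs_nat m).

Definition dist_gt (x x' : point) (eps : R) : Prop :=
  (exists k, fst x k <> fst x' k /\ eps < w1 k) \/
  (exists m, snd x m <> snd x' m /\ eps < w2 m).

Definition dist_lt (x x' : point) (eps : R) : Prop :=
  (forall k, fst x k <> fst x' k -> w1 k < eps) /\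
  (forall m, snd x m <> snd x' m -> w2 m < eps).

(* The map T(y,z) = (sigma y, sigma^{y_1} z), with (sigma u)_m = u_{m+1}. *)
Definition T (x : point) : point :=
  (fun k => fst x (S k), fun m => snd x (m + fst x 0%nat)%Z).

Definition nsep (n : nat) (eps : R) (x x' : point) : Prop :=
  exists j, (j < n)%nat /\ dist_gt (Nat.iter j T x) (Nat.iter j T x') eps.

Definition separated_list (X : point -> Prop) (n : nat) (eps : R) (E : list point) : Prop :=
  NoDup E /\ (forall x, In x E -> X x) /\
  (forall x x', In x E -> In x' E -> x <> x' -> nsep n eps x x').

(* h_top(X,T) = lim_{eps->0} limsup_n (1/n) log s(n,eps), where s(n,eps) is the
   maximal cardinality of an (n,eps)-separated subset of X.  Since
   h_top >= 0 always, h_top = 0 unfolds to: for every eps > 0 and delta > 0,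
   eventually every (n,eps)-separated subset of X has at most exp(delta n)
   elements (finite subsets suffice, an infinite one containing arbitrarily
   large finite ones). *)
Definition zero_topological_entropy (X : point -> Prop) : Prop :=
  forall eps delta : R, 0 < eps -> 0 < delta ->
  exists N : nat, forall n : nat, (N <= n)%nat ->
  forall E : list point, separated_list X n eps E ->
  INR (length E) <= exp (delta * INR n).

(* The construction.  q : nat -> nat with q_k meaningful for k >= 1.        *)

Definition qi (q : nat -> nat) (i k : nat) : nat :=
  match i with
  | 0 => q (2 * k)%nat
  | 1 => q (2 * k + 1)%nat
  | 2 => (q (2 * k)%nat - 1)%nat
  | _ => (q (2 * k + 1)%nat - 1)%nat
  end.

Definition Li (q : nat -> nat) (i k : nat) : nat :=
  (qi q i (S k) / (3 * qi q i k))%nat.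

(* s^{(i)}_k(n), paper index n >= 1 *)
Definition s_word (q : nat -> nat) (i k : nat) (n : nat) : Z :=
  let a := qi q i k in
  let L := Li q i k in
  if (1 <=? n)%nat && (n mod a =? 0)%nat then
    let j := (n / a)%nat in
    if (1 <=? j)%nat && (j <=? L)%nat then 1%Z
    else if (L <? j)%nat && (j <=? 2 * L)%nat then (-1)%Z
    else 0%Z
  else 0%Z.

(* (sigma^{-p} w)(n), paper index n >= 1 *)
Definition shiftR (p : nat) (w : nat -> Z) (n : nat) : Z :=
  if (n <=? p)%nat then 0%Z else w (n - p)%nat.

Definition window_ok (q : nat -> nat) (i k : nat) (y : seq1) : Prop :=
  exists p : nat, (p <= qi q i k)%nat /\
    forall n : nat, (qi q i k <= n)%nat -> (n <= qi q i (S k) - 1)%nat ->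
      py y n = shiftR p (s_word q i k) n.

Definition P_set (q : nat -> nat) (i : nat) (y : seq1) : Prop :=
  (forall n : nat, (1 <= n)%nat -> (n < qi q i 1)%nat -> py y n = 0%Z) /\
  (forall k : nat, (1 <= k)%nat -> window_ok q i k y).

Definition orbit_union (q : nat -> nat) (i : nat) (x : point) : Prop :=
  exists (n : nat) (y : seq1) (z : seq2),
    P_set q i y /\ (forall m, is_sym (z m)) /\ x = Nat.iter n T (y, z).

Definition closure_Omega (A : point -> Prop) (x : point) : Prop :=
  in_Omega x /\ forall eps : R, 0 < eps -> exists a, A a /\ dist_lt x a eps.

Definition X_i (q : nat -> nat) (i : nat) : point -> Prop :=
  closure_Omega (orbit_union q i).

(* Main.v *)
Require Import Defs.
From Stdlib Require Import Reals ZArith Arith.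
From Stdlib Require Import Lia Lra List Bool IndefiniteDescription Classical_Prop.
Open Scope R_scope.

Module Helpers.
Import ListNotations.

Fixpoint sumZ (f : nat -> Z) (u s : nat) : Z :=
  match s with 0 => 0%Z | S s' => (sumZ f u s' + f (u + s')%nat)%Z end.

Definition Lg (a : nat -> nat) (k : nat) : nat := (a (S k) / (3 * a k))%nat.

Definition sw (a : nat -> nat) (k : nat) (n : nat) : Z :=
  let A := a k in
  let L := Lg a k in
  if (1 <=? n)%nat && (n mod A =? 0)%nat then
    let j := (n / A)%nat in
    if (1 <=? j)%nat && (j <=? L)%nat then 1%Z
    else if (L <? j)%nat && (j <=? 2 * L)%nat then (-1)%Z
    else 0%Z
  else 0%Z.

Lemma s_word_sw q i k n : s_word q i k n = sw (qi q i) k n.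
Proof. reflexivity. Qed.

Local Open Scope nat_scope.

Lemma div_step A x : 1 <= A -> 1 <= x ->
  x / A = (x - 1) / A + (if x mod A =? 0 then 1 else 0).
Proof.
  intros HA Hx.
  pose proof (Nat.div_mod (x-1) A ltac:(lia)) as E.
  pose proof (Nat.mod_upper_bound (x-1) A ltac:(lia)) as U.
  set (qq := (x-1)/A) in *. set (rr := (x-1) mod A) in *.
  destruct (Nat.eq_dec (rr + 1) A) as [Heq|Hne].
  - assert (Hx2 : x = (qq + 1) * A) by nia.
    rewrite Hx2, Nat.div_mul by lia. rewrite Nat.Div0.mod_mul. simpl. lia.
  - assert (Hx2 : x = (rr + 1) + qq * A) by nia.
    assert (Hd : x / A = qq). { rewrite Hx2. rewrite Nat.div_add by lia.
      rewrite Nat.div_small by lia. lia. }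
    assert (Hm : x mod A = rr + 1). { rewrite Hx2. rewrite Nat.Div0.mod_add.
      rewrite Nat.mod_small by lia. lia. }
    rewrite Hd, Hm. destruct (rr + 1 =? 0) eqn:E2; [apply Nat.eqb_eq in E2; lia| lia].
Qed.

Lemma div_add_le u v A : 1 <= A -> (u + v) / A <= u / A + v / A + 1.
Proof.
  intros HA.
  pose proof (Nat.div_mod u A ltac:(lia)). pose proof (Nat.div_mod v A ltac:(lia)).
  pose proof (Nat.mod_upper_bound u A ltac:(lia)). pose proof (Nat.mod_upper_bound v A ltac:(lia)).
  assert (u + v < A * (u / A + v / A + 2)) by nia.
  assert ((u+v)/A < u / A + v / A + 2).
  { apply Nat.Div0.div_lt_upper_bound. lia. }
  lia.
Qed.

Section SW.
Variable a : nat -> nat.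
Variable k : nat.
Hypothesis Hak : 1 <= a k.

Lemma sw_val m :
  sw a k m = if m mod a k =? 0 then
      (if m <? a k then 0%Z else if m <=? Lg a k * a k then 1%Z
       else if m <=? 2 * Lg a k * a k then (-1)%Z else 0%Z) else 0%Z.
Proof.
  unfold sw. set (A := a k) in *. set (L := Lg a k).
  destruct (m mod A =? 0) eqn:Em.
  - apply Nat.eqb_eq in Em.
    pose proof (Nat.div_mod m A ltac:(lia)) as E. rewrite Em, Nat.add_0_r in E.
    set (j := m / A) in *.
    destruct (1 <=? m) eqn:E1; cbn [andb].
    + apply Nat.leb_le in E1.
      repeat match goal with
      | |- context [?x <? ?y] => destruct (Nat.ltb_spec x y)
      | |- context [?x <=? ?y] => destruct (Nat.leb_spec x y)
      end; cbn [andb]; try reflexivity; nia.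
    + apply Nat.leb_gt in E1. assert (m = 0) by lia.
      destruct (Nat.ltb_spec m A); [reflexivity| lia].
  - rewrite andb_false_r. reflexivity.
Qed.

Definition hfun (L c : nat) : Z := (Z.of_nat (Nat.min c L) - Z.of_nat (Nat.min (c - L) L))%Z.

Lemma G_formula x : sumZ (sw a k) 0 x = hfun (Lg a k) ((x - 1) / a k).
Proof.
  induction x.
  - simpl. rewrite Nat.Div0.div_0_l. unfold hfun. simpl. lia.
  - simpl sumZ. rewrite IHx. simpl (0 + x). replace (S x - 1) with x by lia.
    destruct (Nat.eq_dec x 0) as [->|Hx].
    + replace (sw a k 0) with 0%Z by reflexivity. simpl (0 - 1). lia.
    + rewrite (div_step (a k) x Hak ltac:(lia)).
      unfold sw. set (A := a k) in *. set (L := Lg a k).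
      replace (1 <=? x) with true by (symmetry; apply Nat.leb_le; lia).
      cbn [andb].
      destruct (x mod A =? 0) eqn:Em.
      * rewrite (div_step A x Hak ltac:(lia)), Em.
        set (c := (x-1)/A). unfold hfun.
        repeat match goal with
        | |- context [?x <? ?y] => destruct (Nat.ltb_spec x y)
        | |- context [?x <=? ?y] => destruct (Nat.leb_spec x y)
        end; cbn [andb]; lia.
      * rewrite Nat.add_0_r. lia.
Qed.

Lemma hfun_bounds L c : (0 <= hfun L c <= Z.of_nat L)%Z.
Proof. unfold hfun. lia. Qed.

Lemma hfun_lip L c c' : (Z.abs (hfun L c - hfun L c') <= Z.of_nat c - Z.of_nat c' )%Z \/ (Z.abs (hfun L c - hfun L c') <= Z.of_nat c' - Z.of_nat c)%Z.
Proof. unfold hfun. lia. Qed.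

End SW.

Definition Pre (f : nat -> Z) (x : nat) : Z := sumZ f 0 x.

Lemma sumZ_add f u s t : sumZ f u (s + t) = (sumZ f u s + sumZ f (u + s) t)%Z.
Proof.
  induction t; simpl.
  - rewrite Nat.add_0_r. lia.
  - rewrite Nat.add_succ_r. simpl. rewrite IHt. rewrite Nat.add_assoc. lia.
Qed.

Lemma sumZ_Pre f u s : sumZ f u s = (Pre f (u + s) - Pre f u)%Z.
Proof. unfold Pre. rewrite (sumZ_add f 0 u s). simpl. lia. Qed.

Lemma sumZ_ext f g u s : (forall r, r < s -> f (u + r) = g (u + r)) -> sumZ f u s = sumZ g u s.
Proof.
  induction s; intros H; simpl; auto.
  rewrite IHs by (intros; apply H; lia). rewrite H by lia. reflexivity.
Qed.

Lemma Pre_clip g lo hi x : lo <= hi ->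
  Pre (fun n => if (lo <=? n) && (n <? hi) then g n else 0%Z) x =
  (Pre g (Nat.min (Nat.max x lo) hi) - Pre g lo)%Z.
Proof.
  intros Hlh. unfold Pre. induction x.
  - simpl. replace (Nat.min lo hi) with lo by lia. lia.
  - simpl sumZ at 1. rewrite IHx. simpl (0 + x).
    destruct (Nat.leb_spec lo x); destruct (Nat.ltb_spec x hi); cbn [andb].
    + replace (Nat.min (Nat.max (S x) lo) hi) with (S x) by lia.
      replace (Nat.min (Nat.max x lo) hi) with x by lia. simpl. lia.
    + replace (Nat.min (Nat.max (S x) lo) hi) with hi by lia.
      replace (Nat.min (Nat.max x lo) hi) with hi by lia. lia.
    + replace (Nat.min (Nat.max (S x) lo) hi) with lo by lia.
      replace (Nat.min (Nat.max x lo) hi) with lo by lia. lia.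
    + lia.
Qed.

Lemma Pre_shift g p x : g 0 = 0%Z -> Pre (fun n => g (n - p)) x = Pre g (x - p).
Proof.
  intros H0. unfold Pre. induction x.
  - reflexivity.
  - simpl sumZ at 1. rewrite IHx. simpl (0 + x).
    destruct (Nat.leb_spec p x).
    + replace (S x - p) with (S (x - p)) by lia. simpl. reflexivity.
    + replace (S x - p) with 0 by lia. replace (x - p) with 0 by lia. rewrite H0. simpl. lia.
Qed.

Definition lev (a : nat -> nat) (pf : nat -> nat) (k n : nat) : Z :=
  if (a k <=? n) && (n <? a (S k)) then sw a k (n - pf k) else 0%Z.

Lemma sw_0 a k : sw a k 0 = 0%Z.
Proof. reflexivity. Qed.

Lemma lev_sum_bound a pf k u s :
  1 <= a k -> a k <= a (S k) -> pf k <= a k ->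
  (Z.abs (sumZ (lev a pf k) u s) <= Z.of_nat (Nat.min (Lg a k) (s / a k + 1)))%Z.
Proof.
  intros H1 H2 H3.
  rewrite sumZ_Pre. unfold lev.
  rewrite !(Pre_clip (fun n => sw a k (n - pf k))) by lia.
  rewrite !(Pre_shift (sw a k)) by apply sw_0.
  unfold Pre; rewrite !G_formula by lia.
  set (lo := a k) in *. set (hi := a (S k)) in *.
  set (X1 := Nat.min (Nat.max (u + s) lo) hi - pf k).
  set (X0 := Nat.min (Nat.max u lo) hi - pf k).
  assert (HX : X0 <= X1 /\ X1 - X0 <= s) by (unfold X0, X1; lia).
  set (c1 := (X1 - 1) / lo). set (c0 := (X0 - 1)/lo).
  assert (Hc : c0 <= c1) by (apply Nat.Div0.div_le_mono; lia).
  assert (Hc2 : c1 <= c0 + s / lo + 1).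
  { unfold c1, c0. replace (X1 - 1) with ((X0 - 1) + (X1 - 1 - (X0 - 1))) by lia.
    pose proof (div_add_le (X0 - 1) (X1 - 1 - (X0 - 1)) lo H1).
    pose proof (Nat.Div0.div_le_mono (X1 - 1 - (X0 - 1)) s lo ltac:(lia)). lia. }
  pose proof (hfun_bounds a k H1 (Lg a k) c1). pose proof (hfun_bounds a k H1 (Lg a k) c0).
  destruct (hfun_lip a k H1 (Lg a k) c1 c0); lia.
Qed.

Fixpoint sumL (l : list nat) (F : nat -> Z) : Z :=
  match l with nil => 0%Z | k :: l' => (F k + sumL l' F)%Z end.
Fixpoint sumLN (l : list nat) (F : nat -> nat) : nat :=
  match l with nil => 0 | k :: l' => F k + sumLN l' F end.

Lemma sumL_zero l F : (forall k, In k l -> F k = 0%Z) -> sumL l F = 0%Z.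
Proof. induction l; simpl; intros H; auto. rewrite H, IHl; auto. Qed.

Lemma sumL_single l F k : NoDup l -> In k l -> (forall k', In k' l -> k' <> k -> F k' = 0%Z) ->
  sumL l F = F k.
Proof.
  induction l as [|x l IH]; simpl; intros Hnd Hin H; [contradiction|].
  inversion Hnd; subst. destruct Hin as [->|Hin].
  - rewrite sumL_zero; [lia|]. intros k' Hk'. apply H; auto. intro; subst; contradiction.
  - rewrite IH; auto. rewrite H; auto. intro; subst; contradiction.
Qed.

Lemma sumL_swap l F u s :
  sumZ (fun n => sumL l (fun k => F k n)) u s = sumL l (fun k => sumZ (F k) u s).
Proof.
  induction s; simpl.
  - rewrite sumL_zero; auto.
  - rewrite IHs. clear IHs. induction l; simpl; auto. lia.
Qed.

Lemma sumL_bound l F G : (forall k, In k l -> (Z.abs (F k) <= Z.of_nat (G k))%Z) ->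
  (Z.abs (sumL l F) <= Z.of_nat (sumLN l G))%Z.
Proof.
  induction l; simpl; intros H; [lia|].
  specialize (IHl (fun k Hk => H k (or_intror Hk))). specialize (H a (or_introl eq_refl)). lia.
Qed.

Lemma sumLN_le l F G : (forall k, In k l -> F k <= G k) -> sumLN l F <= sumLN l G.
Proof. induction l; simpl; intros H; [lia|]. specialize (IHl (fun k Hk => H k (or_intror Hk))). specialize (H a (or_introl eq_refl)). lia. Qed.

Lemma sumLN_const l c : sumLN l (fun _ => c) = length l * c.
Proof. induction l; simpl; lia. Qed.

Lemma sumLN_plus l F G : sumLN l (fun k => F k + G k) = sumLN l F + sumLN l G.
Proof. induction l; simpl; lia. Qed.

Lemma sumLN_in l F k : In k l -> F k <= sumLN l F.
Proof. induction l; simpl; intros H; [contradiction|]. destruct H; [subst; lia| specialize (IHl H); lia]. Qed.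

Definition Pg (a : nat -> nat) (y : seq1) : Prop :=
  (forall n, 1 <= n -> n < a 1 -> py y n = 0%Z) /\
  (forall k, 1 <= k -> exists p, p <= a k /\
     forall n, a k <= n -> n <= a (S k) - 1 -> py y n = shiftR p (sw a k) n).

Lemma P_set_Pg q i y : P_set q i y -> Pg (qi q i) y.
Proof. intros H. exact H. Qed.

Section Struct.
Variable a : nat -> nat.
Hypothesis Ha1 : forall k, 1 <= k -> 1 <= a k.
Hypothesis Ha2 : forall k, 1 <= k -> 2 * a k <= a (S k).

Lemma a_pow k m : 1 <= k -> 2 ^ m * a k <= a (k + m).
Proof.
  intros Hk. induction m.
  - rewrite Nat.add_0_r. simpl. lia.
  - rewrite Nat.add_succ_r. pose proof (Ha2 (k + m) ltac:(lia)). simpl. lia.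
Qed.

Lemma a_strict k k' : 1 <= k -> k < k' -> a k < a k'.
Proof.
  intros Hk Hkk'. pose proof (a_pow k (k' - k) Hk). replace (k + (k' - k)) with k' in H by lia.
  pose proof (Ha1 k Hk). assert (2 ^ (k' - k) >= 2).
  { replace (k' - k) with (S (k' - k - 1)) by lia. simpl. pose proof (Nat.pow_nonzero 2 (k'-k-1)). lia. }
  nia.
Qed.

Lemma a_mono k k' : 1 <= k -> k <= k' -> a k <= a k'.
Proof. intros. destruct (Nat.eq_dec k k'); [subst; lia|]. pose proof (a_strict k k'); lia. Qed.

Lemma a_ge_k k : 1 <= k -> k <= a k.
Proof.
  intros Hk. induction k; [lia|]. destruct (Nat.eq_dec k 0); [subst; apply Ha1; lia|].
  pose proof (a_strict k (S k) ltac:(lia) ltac:(lia)). specialize (IHk ltac:(lia)). lia.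
Qed.

Lemma a_ge_pow k : 1 <= k -> 2 ^ (k - 1) <= a k.
Proof.
  intros Hk. pose proof (a_pow 1 (k - 1) (le_n 1)). replace (1 + (k - 1)) with k in H by lia.
  pose proof (Ha1 1 (le_n 1)). nia.
Qed.

Lemma level_exists n : exists k, 1 <= k /\ n < a (S k) /\ (k = 1 \/ a k <= n).
Proof.
  induction n.
  - exists 1. split; [lia|]. split; [pose proof (Ha1 2); lia| left; auto].
  - destruct IHn as [k [Hk [H1 H2]]].
    destruct (Nat.ltb_spec (S n) (a (S k))).
    + exists k. split; auto. split; auto. destruct H2; [left; auto| right; lia].
    + exists (S k). split; [lia|]. split; [pose proof (a_strict (S k) (S (S k))); lia| right; lia].
Qed.

Lemma Pg_choice y : Pg a y -> exists pf : nat -> nat,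
  forall k, 1 <= k -> pf k <= a k /\
     forall n, a k <= n -> n < a (S k) -> py y n = lev a pf k n.
Proof.
  intros [_ HP].
  assert (H : forall k, exists p, 1 <= k -> p <= a k /\
     forall n, a k <= n -> n <= a (S k) - 1 -> py y n = shiftR p (sw a k) n).
  { intros k. destruct (Nat.leb_spec 1 k).
    - destruct (HP k H) as [p Hp]. exists p; auto.
    - exists 0. intros; lia. }
  set (f := fun k => proj1_sig (constructive_indefinite_description _ (H k))).
  assert (Hf : forall k, 1 <= k -> f k <= a k /\ forall n, a k <= n -> n <= a (S k) - 1 -> py y n = shiftR (f k) (sw a k) n).
  { intros k. exact (proj2_sig (constructive_indefinite_description _ (H k))). }
  clearbody f. exists f.
  intros k Hk. destruct (Hf k Hk) as [Hp1 Hp2]. split; auto.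
  intros n Hn1 Hn2. rewrite Hp2 by lia. unfold lev, shiftR.
  destruct (Nat.leb_spec (a k) n); [|lia]. destruct (Nat.ltb_spec n (a (S k))); [|lia]. cbn [andb].
  destruct (Nat.leb_spec n (f k)).
  - replace (n - f k) with 0 by lia. reflexivity.
  - reflexivity.
Qed.

Lemma cover y pf t M k0 n : Pg a y ->
  (forall k, 1 <= k -> pf k <= a k /\
     forall n, a k <= n -> n < a (S k) -> py y n = lev a pf k n) ->
  1 <= k0 -> t + 1 < a (S k0) -> (k0 = 1 \/ a k0 <= t + 1) ->
  t + 1 <= n -> n < a (k0 + M) ->
  py y n = sumL (seq k0 M) (fun k => lev a pf k n).
Proof.
  intros [HP0 _] Hpf Hk0 Hk01 Hk02 Hn1 Hn2.
  destruct (Nat.ltb_spec n (a 1)).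
  - rewrite HP0 by lia. symmetry. apply sumL_zero. intros k Hk. apply in_seq in Hk.
    unfold lev. pose proof (a_mono 1 k ltac:(lia) ltac:(lia)).
    destruct (Nat.leb_spec (a k) n); [lia|]. reflexivity.
  - destruct (level_exists n) as [k [Hk [Hn3 Hn4]]].
    assert (Hkn : a k <= n) by (destruct Hn4; [subst; lia| lia]).
    assert (Hin : In k (seq k0 M)).
    { apply in_seq. split.
      - destruct (Nat.ltb_spec k k0); [|lia]. destruct Hk02; [lia|].
        pose proof (a_mono (S k) k0 ltac:(lia) ltac:(lia)). lia.
      - destruct (Nat.ltb_spec k (k0 + M)); [lia|].
        pose proof (a_mono (k0 + M) k ltac:(lia) ltac:(lia)). lia. }
    rewrite (sumL_single _ _ k (seq_NoDup _ _) Hin).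
    + destruct (Hpf k Hk) as [_ Hw]. apply Hw; auto.
    + intros k' Hk' Hne. apply in_seq in Hk'. unfold lev.
      destruct (Nat.ltb_spec k' k).
      * pose proof (a_mono (S k') k ltac:(lia) ltac:(lia)).
        destruct (Nat.ltb_spec n (a (S k'))); [lia|]. rewrite andb_false_r. reflexivity.
      * pose proof (a_mono (S k) k' ltac:(lia) ltac:(lia)).
        destruct (Nat.leb_spec (a k') n); [lia|]. reflexivity.
Qed.

End Struct.

Definition bv (lo hi md rho c1 c2 c3 r : nat) : Z :=
  if (lo <=? r) && (r <? hi) && ((r + rho) mod md =? 0) then
    (if r <? c1 then 0%Z else if r <? c2 then 1%Z else if r <? c3 then (-1)%Z else 0%Z)
  else 0%Z.

Definition swv (A L m : nat) : Z :=
  if m mod A =? 0 then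
      (if m <? A then 0%Z else if m <=? L * A then 1%Z
       else if m <=? 2 * L * A then (-1)%Z else 0%Z) else 0%Z.

Lemma mod_small2 x d : 0 < d -> x < 2 * d -> (x mod d = 0 <-> x = 0 \/ x = d).
Proof.
  intros Hd Hx. destruct (Nat.ltb_spec x d).
  - rewrite Nat.mod_small by lia. lia.
  - replace x with ((x - d) + 1 * d) by lia. rewrite Nat.Div0.mod_add.
    rewrite Nat.mod_small by lia. lia.
Qed.

Lemma mod_shift A e p r : 1 <= A -> p <= e + r -> p <= A ->
  (r + (e + A - p) mod A) mod A = (e + r - p) mod A.
Proof.
  intros HA H1 H2. rewrite Nat.Div0.add_mod_idemp_r.
  replace (r + (e + A - p)) with ((e + r - p) + 1 * A) by lia.
  apply Nat.Div0.mod_add.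
Qed.

Lemma block_exists A B p L e N : 1 <= A -> A <= B -> p <= A ->
  exists lo hi md rho c1 c2 c3,
    lo <= N + 1 /\ hi <= N + 1 /\ md <= N + 1 /\ rho <= N + 1 /\
    c1 <= N + 1 /\ c2 <= N + 1 /\ c3 <= N + 1 /\
    forall r, r < N -> bv lo hi md rho c1 c2 c3 r =
       (if (A <=? e + r) && (e + r <? B) then swv A L (e + r - p) else 0%Z).
Proof.
  intros HA HAB HpA.
  set (LA := L * A).
  set (rho0 := (e + A - p) mod A).
  assert (Hrho0 : rho0 < A) by (apply Nat.mod_upper_bound; lia).
  assert (Hdiv : exists md rho, md <= N + 1 /\ rho <= N + 1 /\
     forall r, r < N -> p <= e + r -> ((r + rho) mod md =? 0) = ((e + r - p) mod A =? 0)).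
  { destruct (Nat.leb_spec A N).
    - exists A, rho0. split; [lia|]. split; [lia|]. intros r Hr Hp.
      unfold rho0. rewrite mod_shift by lia. reflexivity.
    - set (r0 := if rho0 =? 0 then 0 else A - rho0).
      exists (N + 1), (N + 1 - Nat.min r0 N). split; [lia|]. split; [lia|].
      intros r Hr Hp. rewrite <- (mod_shift A e p r) by lia. fold rho0.
      apply Bool.eq_true_iff_eq. rewrite !Nat.eqb_eq.
      rewrite (mod_small2 (r + (N + 1 - Nat.min r0 N)) (N + 1)) by lia.
      rewrite (mod_small2 (r + rho0) A) by lia.
      unfold r0. destruct (Nat.eqb_spec rho0 0); lia. }
  destruct Hdiv as [md [rho [Hmd [Hrho Hdiv]]]].
  exists (Nat.min (A - e) N), (Nat.min (B - e) N), md, rho,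
    (Nat.min (A + p - e) N), (Nat.min (LA + p + 1 - e) N), (Nat.min (2 * LA + p + 1 - e) N).
  do 7 (split; [lia|]).
  intros r Hr. unfold bv, swv.
  replace (2 * L * A) with (2 * LA) by (unfold LA; lia). fold LA.
  destruct (Nat.leb_spec (Nat.min (A - e) N) r); destruct (Nat.ltb_spec r (Nat.min (B - e) N));
  destruct (Nat.leb_spec A (e + r)); destruct (Nat.ltb_spec (e + r) B); cbn [andb]; try lia;
  try reflexivity.
  rewrite (Hdiv r Hr ltac:(lia)).
  destruct ((e + r - p) mod A =? 0); [|reflexivity].
  repeat match goal with
  | |- context [?x <? ?y] => destruct (Nat.ltb_spec x y)
  | |- context [?x <=? ?y] => destruct (Nat.leb_spec x y)
  end; try reflexivity; lia.
Qed.

Fixpoint evalB (ps : list nat) (r : nat) : Z :=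
  match ps with
  | lo :: hi :: md :: rho :: c1 :: c2 :: c3 :: rest => (bv lo hi md rho c1 c2 c3 r + evalB rest r)%Z
  | _ => 0%Z
  end.

Fixpoint allLists {T : Type} (A : list T) (m : nat) : list (list T) :=
  match m with
  | 0 => [nil]
  | S m' => map (fun pr => fst pr :: snd pr) (list_prod A (allLists A m'))
  end.

Lemma allLists_length {T} (A : list T) m : length (allLists A m) = length A ^ m.
Proof.
  induction m; simpl; auto. rewrite length_map, length_prod, IHm. reflexivity.
Qed.

Lemma allLists_in {T} (A : list T) l : (forall v, In v l -> In v A) -> In l (allLists A (length l)).
Proof.
  induction l; simpl; intros H; auto.
  apply in_map_iff. exists (a, l). split; auto. apply in_prod; auto.
Qed.

Lemma sw_swv a k m : 1 <= a k -> sw a k m = swv (a k) (Lg a k) m.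
Proof. intros H. rewrite sw_val by auto. reflexivity. Qed.

Section Struct2.
Variable a : nat -> nat.
Hypothesis Ha1 : forall k, 1 <= k -> 1 <= a k.
Hypothesis Ha2 : forall k, 1 <= k -> 2 * a k <= a (S k).

Lemma build_blocks pf e N l :
  (forall k, In k l -> 1 <= k /\ pf k <= a k) ->
  exists ps, length ps = 7 * length l /\ (forall v, In v ps -> v <= N + 1) /\
    forall r, r < N -> evalB ps r = sumL l (fun k => lev a pf k (e + r)).
Proof.
  induction l as [|k l IH]; intros H.
  - exists nil. simpl. split; auto. split; [tauto|]. auto.
  - destruct IH as [ps [Hl [Hb He]]]. { intros; apply H; simpl; auto. }
    destruct (H k (or_introl eq_refl)) as [Hk Hpk].
    pose proof (Ha1 k Hk). pose proof (Ha2 k Hk).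
    destruct (block_exists (a k) (a (S k)) (pf k) (Lg a k) e N ltac:(lia) ltac:(lia) Hpk)
      as [lo [hi [md [rho [c1 [c2 [c3 [G1 [G2 [G3 [G4 [G5 [G6 [G7 Hbv]]]]]]]]]]]]]].
    exists (lo :: hi :: md :: rho :: c1 :: c2 :: c3 :: ps). split; [simpl; lia|]. split.
    + intros v Hv. simpl in Hv. intuition (subst; auto).
    + intros r Hr. simpl evalB. rewrite He by auto. simpl sumL. rewrite Hbv by auto.
      unfold lev. rewrite sw_swv by auto. reflexivity.
Qed.


Lemma word_repr y t N M : Pg a y -> 1 <= M -> N <= 2 ^ (M - 1) ->
  exists ps, length ps = 7 * M /\ (forall v, In v ps -> v <= N + 1) /\
    forall r, r < N -> y (t + r) = evalB ps r.
Proof.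
  intros HP HM HN.
  destruct (Pg_choice a y HP) as [pf Hpf].
  destruct (level_exists a Ha1 Ha2 (t + 1)) as [k0 [Hk0 [Hk01 Hk02]]].
  destruct (build_blocks pf (t + 1) N (seq k0 M)) as [ps [Hl [Hb He]]].
  { intros k Hk. apply in_seq in Hk. split; [lia|]. apply Hpf; lia. }
  exists ps. rewrite length_seq in Hl. split; auto. split; auto.
  intros r Hr. rewrite He by auto.
  rewrite <- (cover a Ha1 Ha2 y pf t M k0 (t + 1 + r)); auto; try lia.
  - unfold py. f_equal. lia.
  - pose proof (a_pow a Ha2 (S k0) (M - 1) ltac:(lia)).
    replace (S k0 + (M - 1)) with (k0 + M) in H by lia. nia.
Qed.

End Struct2.

Lemma geom_sum K0 X m s :
  sumLN (seq s m) (fun k => if K0 <=? k then X / 2 ^ (k - K0) else 0) <= (2 * X) / 2 ^ (s - K0).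
Proof.
  revert s. induction m; intros s; simpl; [lia|].
  specialize (IHm (S s)).
  destruct (Nat.leb_spec K0 s).
  - replace (S s - K0) with (S (s - K0)) in IHm by lia.
    rewrite Nat.pow_succ_r' in IHm.
    rewrite Nat.Div0.div_mul_cancel_l in IHm by lia.
    pose proof (Nat.Div0.div_mul_le X (2 ^ (s - K0)) 2). replace (X + (X + 0)) with (2 * X) by lia. lia.
  - replace (S s - K0) with 0 in IHm by lia. replace (s - K0) with 0 by lia. simpl in *. lia.
Qed.

Lemma sumZ_shift1 f t s : sumZ (fun n => f (n + 1)) t s = sumZ f (t + 1) s.
Proof. induction s; simpl; auto. rewrite IHs. do 2 f_equal. lia. Qed.

Section Struct3.
Variable a : nat -> nat.
Hypothesis Ha1 : forall k, 1 <= k -> 1 <= a k.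
Hypothesis Ha2 : forall k, 1 <= k -> 2 * a k <= a (S k).

Lemma range_repr y t N M : Pg a y -> 1 <= M -> N <= 2 ^ (M - 1) ->
  exists k0, 1 <= k0 /\ forall s, s <= N ->
   (Z.abs (sumZ y t s) <= Z.of_nat (sumLN (seq k0 M) (fun k => Nat.min (Lg a k) (N / a k + 1))))%Z.
Proof.
  intros HP HM HN.
  destruct (Pg_choice a y HP) as [pf Hpf].
  destruct (level_exists a Ha1 Ha2 (t + 1)) as [k0 [Hk0 [Hk01 Hk02]]].
  exists k0. split; auto. intros s Hs.
  assert (HaM : t + 1 + N <= a (k0 + M)).
  { pose proof (a_pow a Ha2 (S k0) (M - 1) ltac:(lia)).
    replace (S k0 + (M - 1)) with (k0 + M) in H by lia. assert (1 <= 2 ^ (M - 1)) by (apply Nat.neq_0_lt_0, Nat.pow_nonzero; lia). nia. }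
  rewrite (sumZ_ext y (fun n => sumL (seq k0 M) (fun k => lev a pf k (n + 1))) t s).
  2:{ intros r Hr. rewrite <- (cover a Ha1 Ha2 y pf t M k0 (t + r + 1)); auto; try lia.
      unfold py. f_equal. lia. }
  rewrite sumL_swap. apply sumL_bound.
  intros k Hk. apply in_seq in Hk.
  destruct (Hpf k ltac:(lia)) as [Hp _].
  rewrite sumZ_shift1.
  pose proof (lev_sum_bound a pf k (t + 1) s (Ha1 k ltac:(lia))
    (a_mono a Ha1 Ha2 k (S k) ltac:(lia) ltac:(lia)) Hp).
  pose proof (Nat.Div0.div_le_mono s N (a k) Hs). lia.
Qed.

Lemma range_asym K0 : 1 <= K0 -> exists C, forall N M k0, 1 <= k0 ->
  sumLN (seq k0 M) (fun k => Nat.min (Lg a k) (N / a k + 1)) <= M * C + 2 * (N / a K0).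
Proof.
  intros HK0. exists (sumLN (seq 1 K0) (Lg a) + 1). intros N M k0 Hk0.
  set (C := sumLN (seq 1 K0) (Lg a) + 1).
  set (X := N / a K0).
  eapply Nat.le_trans.
  - apply (sumLN_le _ _ (fun k => C + (if K0 <=? k then X / 2 ^ (k - K0) else 0))).
    intros k Hk. apply in_seq in Hk.
    destruct (Nat.leb_spec K0 k).
    + assert (N / a k <= X / 2 ^ (k - K0)).
      { unfold X. rewrite Nat.Div0.div_div. apply Nat.div_le_compat_l.
        pose proof (a_pow a Ha2 K0 (k - K0) HK0). replace (K0 + (k - K0)) with k in H0 by lia.
        pose proof (Ha1 K0 HK0). pose proof (Nat.pow_nonzero 2 (k - K0)). nia. }
      lia.
    + pose proof (sumLN_in (seq 1 K0) (Lg a) k ltac:(apply in_seq; lia)). unfold C. lia.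
  - rewrite sumLN_plus, sumLN_const, length_seq.
    pose proof (geom_sum K0 X M k0).
    assert (2 * X / 2 ^ (k0 - K0) <= 2 * X).
    { apply Nat.Div0.div_le_upper_bound. pose proof (Nat.pow_nonzero 2 (k0 - K0)). nia. }
    lia.
Qed.

End Struct3.

Lemma iter_fst j x k : fst (Nat.iter j T x) k = fst x (j + k).
Proof.
  revert k. induction j; intros k; simpl; auto.
  rewrite IHj. f_equal. lia.
Qed.

Lemma iter_snd j x m : snd (Nat.iter j T x) m = snd x (m + sumZ (fst x) 0 j)%Z.
Proof.
  revert m. induction j; intros m; simpl.
  - f_equal. lia.
  - rewrite IHj. rewrite iter_fst. f_equal. rewrite Nat.add_0_r. lia.
Qed.

Lemma map_seq_eq {T} (f g : nat -> T) s N : map f (seq s N) = map g (seq s N) ->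
  forall k, s <= k -> k < s + N -> f k = g k.
Proof.
  revert s. induction N; intros s H k Hk1 Hk2; [lia|].
  simpl in H. injection H as H1 H2.
  destruct (Nat.eq_dec k s); [subst; auto|]. apply (IHN (S s)); auto; lia.
Qed.

Lemma X_word q i x N : X_i q i x ->
  exists y t, Pg (qi q i) y /\ forall k, k <= N -> fst x k = y (t + k).
Proof.
  intros [_ Hcl].
  assert (Hw : (0 < w1 N)%R) by (unfold w1; apply pow_lt; apply Rinv_0_lt_compat; lra).
  destruct (Hcl _ Hw) as [a0 [[t [y [z [HP [_ ->]]]]] [Hd _]]].
  exists y, t. split; [apply P_set_Pg; auto|].
  intros k Hk. destruct (Z.eq_dec (fst x k) (fst (Nat.iter t T (y, z)) k)) as [E|E].
  - rewrite E, iter_fst. reflexivity.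
  - exfalso. specialize (Hd k E). unfold w1 in Hd.
    assert (((/ 3) ^ S N <= (/ 3) ^ S k)%R).
    { rewrite !pow_inv. apply Rinv_le_contravar. apply pow_lt; lra.
      apply Rle_pow; [lra| lia]. }
    lra.
Qed.

Lemma cube_le_pow l : 10 <= l -> l * l * l <= 2 ^ l.
Proof.
  intros Hl. induction Hl.
  - simpl. lia.
  - rewrite Nat.pow_succ_r'. nia.
Qed.

Lemma poly_le_pow c c' : exists l0, forall l, l0 <= l -> c * ((l + 3) * (l + 3)) + c' <= 2 ^ l.
Proof.
  exists (10 + 16 * c + c'). intros l Hl.
  pose proof (cube_le_pow l ltac:(lia)).
  assert (c * ((l + 3) * (l + 3)) <= 4 * c * (l * l)) by nia.
  assert (16 * c * (l * l) <= l * l * l) by nia.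
  assert (c' * 2 <= l * l * l) by nia.
  nia.
Qed.

Lemma asym_nat D C K l0 n X aK0 :
  K + 2 + 2 ^ l0 <= n -> X * aK0 <= n + K -> 32 * D <= aK0 ->
  (forall l, l0 <= l -> 2 * D * (7 + 4 * C) * ((l + 3) * (l + 3)) + 2 * D * (4 * K + 2) <= 2 ^ l) ->
  let M := Nat.log2 (n + K + 2) + 2 in
  D * (7 * M * M + 4 * (M * C + 2 * X + K) + 2) <= n.
Proof.
  intros Hn HX HaK Hl0 M.
  set (l := Nat.log2 n).
  assert (Hl1 : 2 ^ l <= n) by (apply Nat.log2_spec; lia).
  assert (Hl2 : l0 <= l) by (apply Nat.log2_le_pow2; lia).
  assert (HM : M <= l + 3).
  { unfold M, l. pose proof (Nat.log2_le_mono (n + K + 2) (2 * n) ltac:(lia)).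
    rewrite Nat.log2_double in H by lia. lia. }
  specialize (Hl0 l Hl2).
  assert (16 * D * X <= n) by nia.
  assert (M * M <= (l + 3) * (l + 3)) by nia.
  assert (M * C <= (l + 3) * (l + 3) * C) by nia.
  nia.
Qed.

Lemma pow2_le_exp Q : (2 ^ Q <= exp (INR Q))%R.
Proof.
  induction Q.
  - simpl. rewrite exp_0. lra.
  - rewrite S_INR, exp_plus. simpl.
    pose proof (exp_ineq1 1 ltac:(lra)).
    assert (0 <= 2 ^ Q)%R by (apply pow_le; lra).
    nra.
Qed.

Lemma map_seq_eq_Z (f g : Z -> Z) W : 
  map f (map (fun i => (Z.of_nat i - Z.of_nat W)%Z) (seq 0 (2 * W + 1))) =
  map g (map (fun i => (Z.of_nat i - Z.of_nat W)%Z) (seq 0 (2 * W + 1))) ->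
  forall m, (Z.abs m <= Z.of_nat W)%Z -> f m = g m.
Proof.
  rewrite !map_map. intros H m Hm.
  pose proof (map_seq_eq _ _ _ _ H (Z.to_nat (m + Z.of_nat W)) ltac:(lia) ltac:(lia)) as H'.
  simpl in H'. replace (Z.of_nat (Z.to_nat (m + Z.of_nat W)) - Z.of_nat W)%Z with m in H' by lia.
  exact H'.
Qed.

Lemma sumZ_shiftt f t j : sumZ (fun r => f (t + r)) 0 j = sumZ f t j.
Proof. induction j; simpl; auto. rewrite IHj. reflexivity. Qed.

Theorem entropy_generic (X : point -> Prop) (a : nat -> nat)
  (Ha1 : forall k, 1 <= k -> 1 <= a k) (Ha2 : forall k, 1 <= k -> 2 * a k <= a (S k))
  (HO : forall x, X x -> in_Omega x)
  (HW : forall x, X x -> forall N, exists y t, Pg a y /\ forall k, k <= N -> fst x k = y (t + k)) :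
  zero_topological_entropy X.
Proof.
  intros eps delta Heps Hdelta.
  destruct (pow_lt_1_zero (/3) ltac:(rewrite Rabs_right; lra) eps Heps) as [K HK].
  destruct (archimed_cor1 delta Hdelta) as [D [HD1 HD2]].
  set (K0 := 32 * D).
  destruct (range_asym a Ha1 Ha2 K0 ltac:(unfold K0; lia)) as [C HC].
  destruct (poly_le_pow (2 * D * (7 + 4 * C)) (2 * D * (4 * K + 2))) as [l0 Hl0].
  exists (K + 2 + 2 ^ l0). intros n Hn E [HND [HEX HEsep]].
  set (N := n + K). set (M := Nat.log2 (N + 2) + 2).
  set (B := M * C + 2 * (N / a K0)). set (W := B + K).
  assert (HM1 : 1 <= M) by (unfold M; lia).
  assert (HMN : N + 2 <= 2 ^ (M - 1)).
  { unfold M. replace (Nat.log2 (N + 2) + 2 - 1) with (S (Nat.log2 (N + 2))) by lia.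
    pose proof (Nat.log2_spec (N + 2) ltac:(lia)). lia. }
  assert (HM2 : 2 ^ (M - 1) <= 2 ^ M) by (apply Nat.pow_le_mono_r; lia).
  assert (Hasym : D * (7 * M * M + 4 * W + 2) <= n).
  { pose proof (asym_nat D C K l0 n (N / a K0) (a K0) Hn) as Ha.
    assert (HaK0 : K0 <= a K0) by (apply (a_ge_k a Ha1 Ha2); unfold K0; lia).
    pose proof (Nat.Div0.mul_div_le N (a K0)).
    specialize (Ha ltac:(fold N; nia) ltac:(fold K0; lia)).
    specialize (Ha ltac:(intros l Hl; specialize (Hl0 l Hl); nia)).
    simpl in Ha. unfold W, B. fold N in Ha. fold M in Ha. lia. }
  assert (Hrange : forall x, In x E -> forall j, j <= N -> (Z.abs (sumZ (fst x) 0 j) <= Z.of_nat B)%Z).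
  { intros x Hx j Hj. destruct (HW x (HEX x Hx) N) as [y [t [HP Hy]]].
    destruct (range_repr a Ha1 Ha2 y t N M HP HM1 ltac:(lia)) as [k0 [Hk0 Hr]].
    rewrite (sumZ_ext (fst x) (fun r => y (t + r)) 0 j) by (intros; apply Hy; lia).
    rewrite sumZ_shiftt. pose proof (Hr j Hj). pose proof (HC N M k0 Hk0). lia. }
  set (zr := map (fun i => (Z.of_nat i - Z.of_nat W)%Z) (seq 0 (2 * W + 1))).
  set (code := fun x : point => (map (fst x) (seq 0 N), map (snd x) zr)).
  set (Wl := map (fun ps => map (evalB ps) (seq 0 N)) (allLists (seq 0 (N + 2)) (7 * M))).
  set (Zl := allLists [(-1)%Z; 0%Z; 1%Z] (2 * W + 1)).
  assert (Hincl : incl (map code E) (list_prod Wl Zl)).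
  { intros c Hc. apply in_map_iff in Hc. destruct Hc as [x [<- Hx]].
    apply in_prod.
    - destruct (HW x (HEX x Hx) N) as [y [t [HP Hy]]].
      destruct (word_repr a Ha1 Ha2 y t N M HP HM1 ltac:(lia)) as [ps [Hl [Hb He]]].
      apply in_map_iff. exists ps. split.
      + apply map_ext_in. intros r Hr. apply in_seq in Hr.
        rewrite Hy by lia. symmetry. apply He. lia.
      + rewrite <- Hl. apply allLists_in. intros v Hv. apply in_seq. specialize (Hb v Hv). lia.
    - unfold Zl. replace (2 * W + 1) with (length (map (snd x) zr))
        by (unfold zr; rewrite !length_map, length_seq; reflexivity).
      apply allLists_in. intros v Hv. apply in_map_iff in Hv. destruct Hv as [m [<- _]].
      destruct (HO x (HEX x Hx)) as [_ Hs]. destruct (Hs m) as [-> | [-> | ->]]; simpl; auto. }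
  assert (Hnd : NoDup (map code E)).
  { apply NoDup_map_NoDup_ForallPairs; auto.
    intros x x' Hx Hx' Heq. destruct (Classical_Prop.classic (x = x')) as [|Hne]; auto.
    exfalso. destruct (HEsep x x' Hx Hx' Hne) as [j [Hj Hd]].
    unfold code in Heq. injection Heq as Heq1 Heq2.
    pose proof (map_seq_eq _ _ _ _ Heq1) as Hf.
    pose proof (map_seq_eq_Z _ _ _ Heq2) as Hs.
    destruct Hd as [[k [Hk1 Hk2]] | [m [Hm1 Hm2]]].
    - rewrite !iter_fst in Hk1. apply Hk1.
      assert (k < K).
      { destruct (Nat.leb_spec K (S k)); [|lia]. specialize (HK (S k) H).
        rewrite Rabs_right in HK by (apply Rle_ge, pow_le; lra). unfold w1 in Hk2. lra. }
      apply Hf; unfold N; lia.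
    - rewrite !iter_snd in Hm1. apply Hm1.
      assert (Hm : (Z.abs_nat m < K)%nat).
      { destruct (Nat.leb_spec K (Z.abs_nat m)); [|lia]. specialize (HK _ H).
        rewrite Rabs_right in HK by (apply Rle_ge, pow_le; lra). unfold w2 in Hm2. lra. }
      assert (Hsj : sumZ (fst x) 0 j = sumZ (fst x') 0 j).
      { apply sumZ_ext. intros r Hr. apply Hf; unfold N; lia. }
      rewrite <- Hsj. apply Hs.
      pose proof (Hrange x Hx j ltac:(unfold N; lia)). unfold W. lia. }
  pose proof (NoDup_incl_length Hnd Hincl) as Hlen.
  rewrite length_map, length_prod in Hlen.
  unfold Wl, Zl in Hlen. rewrite length_map, !allLists_length, length_seq in Hlen.
  simpl length in Hlen.
  set (Q := 7 * M * M + 4 * W + 2).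
  assert (HQ : (N + 2) ^ (7 * M) * 3 ^ (2 * W + 1) <= 2 ^ Q).
  { assert ((N + 2) ^ (7 * M) <= 2 ^ (7 * M * M)).
    { eapply Nat.le_trans. apply Nat.pow_le_mono_l. apply (Nat.le_trans _ _ _ HMN HM2).
      rewrite <- Nat.pow_mul_r. apply Nat.pow_le_mono_r; nia. }
    assert (3 ^ (2 * W + 1) <= 2 ^ (4 * W + 2)).
    { eapply Nat.le_trans. apply (Nat.pow_le_mono_l 3 4); lia. change 4 with (2 ^ 2) at 1.
      rewrite <- (Nat.pow_mul_r 2 2 (2 * W + 1)). apply Nat.pow_le_mono_r; lia. }
    unfold Q. replace (7 * M * M + 4 * W + 2) with (7 * M * M + (4 * W + 2)) by lia. rewrite (Nat.pow_add_r 2 (7 * M * M)). apply Nat.mul_le_mono; auto. }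
  apply (Rle_trans _ (INR (2 ^ Q))).
  { apply le_INR. lia. }
  rewrite pow_INR. simpl (INR 2).
  apply (Rle_trans _ _ _ (pow2_le_exp Q)).
  assert (HQn : (INR Q <= delta * INR n)%R).
  { assert (HDQ : (INR D * INR Q <= INR n)%R) by (rewrite <- mult_INR; apply le_INR; unfold Q; lia).
    assert (HD0 : (0 < INR D)%R) by (apply lt_0_INR; lia).
    assert (HQ0 : (0 <= INR Q)%R) by apply pos_INR.
    assert (HIQ : (INR Q = / INR D * (INR D * INR Q))%R) by (field; lra).
    rewrite HIQ.
    apply (Rle_trans _ (/ INR D * INR n)).
    - apply Rmult_le_compat_l; [apply Rlt_le, Rinv_0_lt_compat; lra| lra].
    - apply Rmult_le_compat_r; [apply pos_INR| lra]. }
  destruct (Rle_lt_or_eq_dec _ _ HQn) as [Hlt|Heq].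
  - apply Rlt_le, exp_increasing, Hlt.
  - rewrite Heq. apply Rle_refl.
Qed.

Lemma q_facts (q : nat -> nat) :
  (2 <= q 1) -> (forall k, 1 <= k -> q k ^ 4 + 3 * q k < q (S k)) ->
  (forall j, 1 <= j -> 2 <= q j) /\ (forall j, 1 <= j -> 2 * q j <= q (S j)).
Proof.
  intros H1 H2.
  assert (Hd : forall j, 1 <= j -> 2 * q j <= q (S j)).
  { intros j Hj. specialize (H2 j Hj). lia. }
  split; auto.
  intros j Hj. induction Hj; auto. specialize (Hd m Hj). lia.
Qed.

Lemma qi_facts q i : i < 4 -> (2 <= q 1) -> (forall k, 1 <= k -> q k ^ 4 + 3 * q k < q (S k)) ->
  (forall k, 1 <= k -> 1 <= qi q i k) /\ (forall k, 1 <= k -> 2 * qi q i k <= qi q i (S k)).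
Proof.
  intros Hi H1 H2. destruct (q_facts q H1 H2) as [Hg Hd].
  destruct i as [|[|[|[|i]]]]; try lia; cbv beta iota delta [qi]; split; intros k Hk;
  try replace (2 * S k + 1) with (S (S (2 * k + 1))) by lia;
  try replace (2 * S k) with (S (S (2 * k))) by lia;
  pose proof (Hg (2 * k) ltac:(lia)); pose proof (Hg (2 * k + 1) ltac:(lia));
  pose proof (Hd (2 * k) ltac:(lia)); pose proof (Hd (S (2 * k)) ltac:(lia));
  pose proof (Hd (2 * k + 1) ltac:(lia)); pose proof (Hd (S (2 * k + 1)) ltac:(lia)); lia.
Qed.

Theorem main_gen q i : i < 4 -> (2 <= q 1) -> (forall k, 1 <= k -> q k ^ 4 + 3 * q k < q (S k)) ->
  zero_topological_entropy (X_i q i).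
Proof.
  intros Hi H1 H2. destruct (qi_facts q i Hi H1 H2) as [Ha1 Ha2].
  apply (entropy_generic (X_i q i) (qi q i) Ha1 Ha2).
  - intros x [Hx _]. exact Hx.
  - intros x Hx N. apply X_word; auto.
Qed.

End Helpers.

Theorem mainTheorem6
  (tau : nat -> R) (q : nat -> nat)
  (tau_pos : forall n : nat, (1 <= n)%nat -> 0 < tau n)
  (tau_noninc : forall m n : nat, (1 <= m)%nat -> (m <= n)%nat -> tau n <= tau m)
  (tau_lim : forall e : R, 0 < e -> exists N : nat, forall n : nat, (N <= n)%nat -> tau n < e)
  (q1_ge2 : (2 <= q 1%nat)%nat)
  (q_incr : forall k : nat, (1 <= k)%nat -> (q k < q (S k))%nat)
  (q_growth : forall k : nat, (1 <= k)%nat -> (q k ^ 4 + 3 * q k < q (S k))%nat)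
  (q_tau : forall k : nat, (1 <= k)%nat ->
     tau ((q (S k) + 2) / 3)%nat < / (16 * INR (q k))) :
  forall i : nat, (i < 4)%nat -> zero_topological_entropy (X_i q i).
Proof.
  intros i Hi. exact (Helpers.main_gen q i Hi q1_ge2 q_growth).
Qed.
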